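(* Let $k$ be a non-archimedean local field of residue characteristic $2$. Let $B(x)=\Delta x^2$ on $k$, where $|\Delta|=|\varpi|$. Let $z=q^{-\beta}$, $w=zq^{-1}$, and $t\in\mathfrak o\setminus\{0\}$ with $|t|=q^{-T}$. If $|2|\ge|t^2|$, then \[ X^B(\beta;t^2)=|\varpi|^{\lfloor e/2\rfloor}\,\frac{1-(zw)^{T+1-\lceil e/2\rceil}}{1-zw} + z\,|\varpi|^{\lceil e/2\rceil}\,\frac{1-(zw)^{T-\lfloor e/2\rfloor}}{1-zw}, \] and $X^B(\beta;t^2)=0$ otherwise.
   Context: $k$ has ring of integers $\mathfrak o$, uniformizer $\varpi$, residue field of cardinality $q$, absolute value normalized by $|\varpi|=q^{-1}$, and $e=\operatorname{ord}(2)$ is the ramification index. On $\mathfrak o^n$ use the additive Haar measure of total mass $1$. For a quadratic form $B$ on $k^n$, $\rho\in\mathfrak o$ and integer $\ell\ge0$: $X_\ell^B(\rho)=\operatorname{meas}\{x\in\mathfrak o^n: B(x)-\rho\in 2\varpi^\ell\mathfrak o\}$ and $X^B(\beta;\rho)=\sum_{\ell\ge0}z^\ell X_\ell^B(\rho)$ with $z=q^{-\beta}$. *)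

(* Defs.v *)
From mathcomp Require Import all_boot all_algebra.
From Stdlib Require Import Reals ZArith ClassicalEpsilon.
From Coquelicot Require Import Coquelicot.

Set Implicit Arguments.
Unset Strict Implicit.
Unset Printing Implicit Defensive.

Section NonArchLocalField.

Variables (k : fieldType) (ord : k -> Z) (unif : k) (reps : seq k).

Local Open Scope ring_scope.

Definition in_o (x : k) : Prop := x = 0 \/ (0 <= ord x)%Z.

Definition in_ideal (c x : k) : Prop := exists y, in_o y /\ x = c * y.

Definition val_cauchy (s : nat -> k) : Prop :=
  forall m : nat, exists N : nat, forall a b : nat, leq N a -> leq N b ->
    in_ideal (unif ^+ m) (s a - s b).

Definition val_converges (s : nat -> k) (L : k) : Prop :=
  forall m : nat, exists N : nat, forall a : nat, leq N a ->
    in_ideal (unif ^+ m) (s a - L).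

(* k is a non-archimedean local field: a field complete for a discrete
   valuation ord (normalised, ord unif = 1) with finite residue field, of which
   reps is a complete set of representatives (so q = size reps). *)
Record is_nonarch_local_field : Prop := {
  ord_mul : forall x y : k, x != 0 -> y != 0 -> ord (x * y) = (ord x + ord y)%Z;
  ord_add : forall x y : k, x != 0 -> y != 0 -> x + y != 0 ->
              (Z.min (ord x) (ord y) <= ord (x + y))%Z;
  unif_neq0 : unif != 0;
  ord_unif : ord unif = 1%Z;
  reps_in_o : forall i : nat, ltn i (size reps) -> in_o (nth 0 reps i);
  reps_distinct : forall i j : nat, ltn i (size reps) -> ltn j (size reps) ->
              in_ideal unif (nth 0 reps i - nth 0 reps j) -> i = j;
  reps_cover : forall x : k, in_o x ->
              exists i : nat, ltn i (size reps) /\ in_ideal unif (x - nth 0 reps i);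
  complete : forall s : nat -> k, val_cauchy s -> exists L : k, val_converges s L
}.

(* residue characteristic 2 (2 lies in the maximal ideal), with 2 <> 0 so that
   e = ord 2 is finite *)
Definition residue_char_two : Prop := (2%:R : k) != 0 /\ in_ideal unif 2%:R.

Definition ram_index : nat := Z.to_nat (ord 2%:R).

(* the i-th digit expansion  sum_{i<N} reps[f i] unif^i : a complete system
   of representatives of o / unif^N o *)
Definition digit_elem (N : nat) (f : {ffun 'I_N -> 'I_(size reps)}) : k :=
  \sum_(i < N) nth 0 reps (f i) * unif ^+ i.

Definition decide (P : Prop) : bool :=
  if excluded_middle_informative P then true else false.

(* number of residue classes a + unif^N o (a in o) entirely contained in S *)
Definition inner_count (S : k -> Prop) (N : nat) : nat :=
  #|[set f : {ffun 'I_N -> 'I_(size reps)} |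
      decide (forall y : k, in_o y -> S (digit_elem f + unif ^+ N * y))]|.

End NonArchLocalField.

Section Measure.
Variables (k : fieldType) (ord : k -> Z) (unif : k) (reps : seq k).
Local Open Scope R_scope.

Definition resq : R := INR (size reps).

Definition absv (x : k) : R :=
  if x == (GRing.zero : k) then 0 else powerRZ resq (- ord x)%Z.

(* Haar measure (total mass 1 on o) of an OPEN subset S of o, computed as
   lim_N q^(-N) * #{ classes mod unif^N contained in S }
   (inner regularity: for open S this is the Haar measure). *)
Definition haar_open (S : k -> Prop) : R :=
  real (Lim_seq (fun N => INR (inner_count ord unif reps S N) / resq ^ N)).

End Measure.

Section Xell.
Variables (k : fieldType) (ord : k -> Z) (unif : k) (reps : seq k).
Local Open Scope ring_scope.
Definition X_ell (B : k -> k) (rho : k) (l : nat) : R :=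
  haar_open ord unif reps (fun x => in_o ord x /\
     in_ideal ord (2%:R * unif ^+ l) (B x - rho)).

Definition sq_form (Delta : k) : k -> k := fun x => Delta * x ^+ 2.

End Xell.

(* q^(-beta) = exp(-beta ln q) for complex beta *)
Definition qpowC (q : R) (beta : C) : C :=
  (Rpower q (- fst beta) * cos (snd beta * ln q),
   - (Rpower q (- fst beta) * sin (snd beta * ln q)))%R.

(* Main.v *)
Require Import Defs.
From mathcomp Require Import all_boot all_algebra.
From Stdlib Require Import Reals ZArith Lia Lra ClassicalEpsilon FunctionalExtensionality PropExtensionality.
From Coquelicot Require Import Coquelicot.
From mathcomp Require Import zify.

Set Implicit Arguments.
Unset Strict Implicit.
Unset Printing Implicit Defensive.
Import GRing.Theory.


Section Val.
Variables (k : fieldType) (ord : k -> Z) (unif : k) (reps : seq k).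
Hypothesis H : is_nonarch_local_field ord unif reps.
Local Open Scope ring_scope.

Definition vge (x : k) (n : Z) : Prop := x = 0 \/ (n <= ord x)%Z.

Lemma ord_one : ord 1 = 0%Z.
Proof.
have h : ord (1 * 1 : k) = (ord (1:k) + ord (1:k))%Z := ord_mul H (oner_neq0 k) (oner_neq0 k).
rewrite mulr1 in h. lia.
Qed.

Lemma ordN1 : ord (-1) = 0%Z.
Proof.
have h1 : (-1 : k) != 0 by rewrite oppr_eq0 oner_neq0.
have h : ord (-1 * -1 : k) = (ord (-1:k) + ord (-1:k))%Z := ord_mul H h1 h1.
rewrite mulrNN mulr1 ord_one in h. lia.
Qed.

Lemma ordN x : ord (- x) = ord x.
Proof.
have [->|x0] := eqVneq x 0; first by rewrite oppr0.
have h1 : (-1 : k) != 0 by rewrite oppr_eq0 oner_neq0.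
rewrite -mulN1r (ord_mul H h1 x0) ordN1. lia.
Qed.

Lemma ordV x : x != 0 -> ord x^-1 = (- ord x)%Z.
Proof.
move=> x0. have xi0 : x^-1 != 0 by rewrite invr_eq0.
have := ord_mul H x0 xi0. rewrite mulfV // ord_one. lia.
Qed.

Lemma ordX x n : x != 0 -> ord (x ^+ n) = (Z.of_nat n * ord x)%Z.
Proof.
move=> x0; elim: n => [|n IH]; first by rewrite expr0 ord_one.
rewrite exprS (ord_mul H x0) ?expf_neq0 // IH. lia.
Qed.

Lemma ord_unifX n : ord (unif ^+ n) = Z.of_nat n.
Proof. rewrite ordX ?(unif_neq0 H) // (ord_unif H). lia. Qed.

Lemma vge0 n : vge 0 n. Proof. by left. Qed.

Lemma vgeD x y n : vge x n -> vge y n -> vge (x + y) n.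
Proof.
case=> [->|hx]; first by rewrite add0r.
case=> [->|hy]; first by rewrite addr0; right.
have [->|x0] := eqVneq x 0; first by rewrite add0r; right.
have [->|y0] := eqVneq y 0; first by rewrite addr0; right.
have [->|s0] := eqVneq (x + y) 0; first by left.
right. have := ord_add H x0 y0 s0. lia.
Qed.

Lemma vgeN x n : vge x n -> vge (- x) n.
Proof. case=> [->|h]; [left; by rewrite oppr0| right; by rewrite ordN]. Qed.

Lemma vgeB x y n : vge x n -> vge y n -> vge (x - y) n.
Proof. by move=> hx hy; apply: vgeD => //; apply: vgeN. Qed.

Lemma vgeM x y n m : vge x n -> vge y m -> vge (x * y) (n + m).
Proof.
case=> [->|hx]; first by rewrite mul0r; left.
case=> [->|hy]; first by rewrite mulr0; left.
have [->|x0] := eqVneq x 0; first by rewrite mul0r; left.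
have [->|y0] := eqVneq y 0; first by rewrite mulr0; left.
right; rewrite (ord_mul H x0 y0). lia.
Qed.

Lemma vge_mono x n m : (m <= n)%Z -> vge x n -> vge x m.
Proof. move=> le; case=> h; [by left|right; lia]. Qed.

Lemma vge_unifX n : vge (unif ^+ n) (Z.of_nat n).
Proof. right; rewrite ord_unifX; lia. Qed.

Lemma vge_ordc c x : c != 0 -> (in_ideal ord c x <-> vge x (ord c)).
Proof.
move=> c0; split.
- case=> y [hy ->]. have := vgeM (or_intror (Z.le_refl (ord c)) : vge c (ord c)) hy.
  by rewrite Z.add_0_r.
- move=> hx; exists (c^-1 * x); split; last by rewrite mulrA mulfV // mul1r.
  have := vgeM (or_intror (Z.le_refl (ord c^-1)) : vge c^-1 (ord c^-1)) hx.
  rewrite ordV //. rewrite Z.add_opp_diag_l. by [].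
Qed.

Lemma in_ideal_unifX n x : in_ideal ord (unif ^+ n) x <-> vge x (Z.of_nat n).
Proof. rewrite vge_ordc ?ord_unifX //; exact: expf_neq0 (unif_neq0 H). Qed.

Lemma in_ideal_unif x : in_ideal ord unif x <-> vge x 1.
Proof. rewrite vge_ordc ?(ord_unif H) //; exact: (unif_neq0 H). Qed.

Lemma ord_add_lt x y : x != 0 -> y != 0 -> (ord x < ord y)%Z ->
  x + y != 0 /\ ord (x + y) = ord x.
Proof.
move=> x0 y0 lt.
have s0 : x + y != 0.
  apply/negP => /eqP e. have : x = - y by apply/eqP; rewrite -subr_eq0 opprK; apply/eqP.
  move=> ex; move: lt; rewrite ex ordN; lia.
split=> //.
have h1 : (Z.min (ord x) (ord y) <= ord (x + y))%Z := ord_add H x0 y0 s0.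
have ny0 : - y != 0 by rewrite oppr_eq0.
have e : (x + y) + - y = x by rewrite addrK.
have h2 : (Z.min (ord (x + y)) (ord (- y)) <= ord ((x + y) + - y))%Z.
  apply: (ord_add H s0 ny0). by rewrite e.
rewrite e ordN in h2. lia.
Qed.

Lemma vge_addr a b n : vge b n -> (vge (a + b) n <-> vge a n).
Proof.
move=> hb; split=> h; last exact: vgeD.
have -> : a = (a + b) - b by rewrite addrK. exact: vgeB.
Qed.


Notation q := (size reps).
Notation r i := (nth 0 reps i).

Lemma q_pos : (0 < q)%nat.
Proof.
have [i [hi _]] := reps_cover H (or_introl (erefl (0:k))).
by apply: leq_ltn_trans hi.
Qed.

Lemma r_o i : (i < q)%nat -> vge (r i) 0.
Proof. move=> hi; exact: (reps_in_o H hi). Qed.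

Lemma sum_shift (a : nat -> k) m :
  \sum_(0 <= i < m.+1) a i * unif ^+ i =
  a 0%nat + unif * \sum_(0 <= i < m) a i.+1 * unif ^+ i.
Proof.
rewrite big_nat_recl // expr0 mulr1 mulr_sumr; congr (_ + _).
by apply: eq_bigr => i _; rewrite exprS mulrA [a _ * _]mulrC -mulrA.
Qed.

Lemma vge_sum_o (a : nat -> k) m :
  (forall i, vge (a i) 0) -> vge (\sum_(0 <= i < m) a i * unif ^+ i) 0.
Proof.
move=> ha; elim/big_ind: _ => //; first exact: vge0.
  by move=> x y; apply: vgeD.
move=> i _ /=; apply: (vge_mono (n:=(0 + Z.of_nat i)%Z)); first lia.
by apply: vgeM => //; apply: vge_unifX.
Qed.

Lemma vge_unif_mul x n : vge (unif * x) (n + 1) -> vge x n.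
Proof.
case=> [/eqP|h].
  by rewrite mulf_eq0 (negbTE (unif_neq0 H)) /= => /eqP ->; left.
have [->|x0] := eqVneq x 0; first by left.
right; move: h; rewrite (ord_mul H (unif_neq0 H) x0) (ord_unif H); lia.
Qed.

Lemma vge_unif : vge unif 1.
Proof. right; rewrite (ord_unif H); lia. Qed.

Lemma digit_uniq m (u v : nat -> nat) :
  (forall i, u i < q)%nat -> (forall i, v i < q)%nat ->
  vge (\sum_(0 <= i < m) (r (u i) - r (v i)) * unif ^+ i) (Z.of_nat m) ->
  forall i, (i < m)%nat -> u i = v i.
Proof.
elim: m u v => [|m IH] u v hu hv; first by [].
rewrite sum_shift => hs.
set S := \sum_(0 <= i < m) _ in hs.
have hS0 : vge S 0.
  by apply: vge_sum_o => i; apply: vgeB; apply: r_o.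
have hUS : vge (unif * S) 1.
  by have := vgeM vge_unif hS0; rewrite Z.add_0_r.
have h0 : vge (r (u 0%nat) - r (v 0%nat)) 1.
  have hs1 := vge_mono (m:=1%Z) (n:=Z.of_nat m.+1) ltac:(lia) hs.
  have := vgeB hs1 hUS; by rewrite addrK.
have e0 : u 0%nat = v 0%nat.
  apply: (reps_distinct H (hu 0%nat) (hv 0%nat)); exact/in_ideal_unif.
rewrite e0 subrr add0r in hs.
have hS : vge S (Z.of_nat m).
  apply: vge_unif_mul; by have -> : (Z.of_nat m + 1)%Z = Z.of_nat m.+1 by lia.
have IH' := IH (fun i => u i.+1) (fun i => v i.+1) (fun i => hu _) (fun i => hv _) hS.
by case=> [_|i hi] //; apply: IH'.
Qed.

Lemma digit_exists m x : vge x 0 -> exists u : nat -> nat,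
  (forall i, u i < q)%nat /\
  vge (x - \sum_(0 <= i < m) r (u i) * unif ^+ i) (Z.of_nat m).
Proof.
elim: m x => [|m IH] x hx.
  exists (fun _ => 0%nat); split; first by move=> _; exact: q_pos.
  by rewrite big_geq // subr0.
have [i0 [hi0 [x' [hx' ex]]]] := reps_cover H hx.
have [u' [hu' hs]] := IH x' hx'.
exists (fun i => if i is j.+1 then u' j else i0); split.
  by case.
rewrite sum_shift /= opprD addrA ex -mulrBr.
have -> : Z.pos (Pos.of_succ_nat m) = (1 + Z.of_nat m)%Z by lia.
exact: vgeM vge_unif hs.
Qed.


Definition fn N (f : {ffun 'I_N -> 'I_q}) (i : nat) : nat :=
  if (insub i : option 'I_N) is Some j then val (f j) else 0%nat.

Lemma fn_val N (f : {ffun 'I_N -> 'I_q}) (j : 'I_N) : fn f j = f j.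
Proof. by rewrite /fn valK. Qed.

Lemma fn_lt N (f : {ffun 'I_N -> 'I_q}) i : (fn f i < q)%nat.
Proof. rewrite /fn; case: insub => [j|]; [exact: ltn_ord | exact: q_pos]. Qed.

Lemma digit_elem_sum N (f : {ffun 'I_N -> 'I_q}) :
  digit_elem unif f = \sum_(0 <= i < N) r (fn f i) * unif ^+ i.
Proof. by rewrite /digit_elem big_mkord; apply: eq_bigr => j _; rewrite fn_val. Qed.

Lemma vge_sum_hi (a : nat -> k) m N : (forall i, vge (a i) 0) ->
  vge (\sum_(m <= i < N) a i * unif ^+ i) (Z.of_nat m).
Proof.
move=> ha; rewrite big_nat_cond; elim/big_ind: _ => //; first exact: vge0.
  by move=> x y; apply: vgeD.
move=> i /andP [/andP [hi _] _] /=.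
apply: (vge_mono (n:=(0 + Z.of_nat i)%Z)); first lia.
by apply: vgeM => //; apply: vge_unifX.
Qed.

Lemma good_iff N m (mN : (m <= N)%nat) (u0 : nat -> nat) :
  (forall i, u0 i < q)%nat ->
  vge (\sum_(0 <= i < m) r (u0 i) * unif ^+ i) (Z.of_nat m) ->
  forall f : {ffun 'I_N -> 'I_q},
  (forall y, in_o ord y -> vge (digit_elem unif f + unif ^+ N * y) (Z.of_nat m)) <->
  (forall j : 'I_N, (j < m)%nat -> val (f j) = u0 j).
Proof.
move=> hu0 hz f.
have hB : vge (\sum_(m <= i < N) r (fn f i) * unif ^+ i) (Z.of_nat m).
  by apply: vge_sum_hi => i; apply: r_o; apply: fn_lt.
have hY : forall y, in_o ord y -> vge (unif ^+ N * y) (Z.of_nat m).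
  move=> y hy; apply: (vge_mono (n:=(Z.of_nat N + 0)%Z)); first lia.
  by apply: vgeM => //; apply: vge_unifX.
have split_d : digit_elem unif f = \sum_(0 <= i < m) r (fn f i) * unif ^+ i
     + \sum_(m <= i < N) r (fn f i) * unif ^+ i.
  by rewrite digit_elem_sum (big_cat_nat (leq0n m) mN).
split.
- move=> hall j hj.
  have := hall 0 (or_introl (erefl _)).
  rewrite (vge_addr _ (hY 0 (or_introl (erefl _)))) split_d (vge_addr _ hB) => hA.
  have hD := vgeB hA hz. rewrite -sumrB in hD.
  rewrite (eq_bigr (fun i => (r (fn f i) - r (u0 i)) * unif ^+ i)) in hD;
    last by move=> i _; rewrite mulrBl.
  have := digit_uniq (fn_lt f) hu0 hD hj; rewrite fn_val; exact.
- move=> hj y hy; rewrite (vge_addr _ (hY y hy)) split_d (vge_addr _ hB).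
  suff -> : \sum_(0 <= i < m) r (fn f i) * unif ^+ i =
            \sum_(0 <= i < m) r (u0 i) * unif ^+ i by [].
  apply: eq_big_nat => i /andP [_ him].
  have hiN : (i < N)%nat by apply: leq_trans him mN.
  have e := fn_val f (Ordinal hiN); have e2 := hj (Ordinal hiN) him.
  simpl in e, e2; by rewrite e e2.
Qed.

Lemma decideP (P : Prop) : decide P = true <-> P.
Proof. rewrite /decide; case: excluded_middle_informative => //. Qed.

Lemma prod_foldr N (G : 'I_N -> nat) :
  foldr muln 1%nat [seq G x | x : 'I_N] = \prod_(x < N) G x.
Proof. by rewrite -big_enum /= unlock /reducebig /image_mem foldr_map. Qed.

Lemma inner_count_ball m N : (m <= N)%nat ->
  inner_count ord unif reps (fun x => vge x (Z.of_nat m)) N = expn q (N - m).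
Proof.
move=> mN.
have [u0 [hu0 hz']] := digit_exists m (vge0 0%Z).
have hz : vge (\sum_(0 <= i < m) r (u0 i) * unif ^+ i) (Z.of_nat m).
  by have := vgeN hz'; rewrite sub0r opprK.
pose g (i : 'I_N) : 'I_q := Ordinal (hu0 i).
pose F (i : 'I_N) : pred 'I_q := if (i < m)%nat then pred1 (g i) else predT.
rewrite /inner_count.
have -> : #|[set f : {ffun 'I_N -> 'I_q} |
      decide (forall y, in_o ord y -> vge (digit_elem unif f + unif ^+ N * y) (Z.of_nat m))]|
   = #|(finfun.family F : simpl_pred {ffun 'I_N -> 'I_q})|.
  apply: eq_card => f; rewrite inE.
  apply/idP/idP.
  - move/decideP/(good_iff mN hu0 hz) => hf; apply/familyP => j.
    rewrite /F; case: ifP => hj //=; apply/eqP/val_inj => /=; exact: hf.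
  - move/familyP => hf; apply/decideP/(good_iff mN hu0 hz) => j hj.
    by have := hf j; rewrite /F hj /= => /eqP ->.
rewrite card_family prod_foldr.
have -> : \prod_(x < N) #|F x| = \prod_(x < N) (if (x < m)%nat then 1%nat else q).
  apply: eq_bigr => x _; rewrite /F; case: ifP => _; first by rewrite card1.
  by rewrite cardT /= size_enum_ord.
rewrite -(big_mkord xpredT (fun x => if (x < m)%nat then 1%nat else q)).
rewrite (big_cat_nat (leq0n m) mN) /=.
rewrite big_nat_cond big1 ?mul1n; last by move=> i /andP [/andP [_ ->]].
rewrite big_nat_cond (eq_bigr (fun _ => q)) -?big_nat_cond ?prod_nat_const_nat ?mul1r //.
by move=> i /andP [/andP [hi _] _]; rewrite ltnNge hi.
Qed.


Lemma INR_expn a b : INR (expn a b) = (INR a ^ b)%R.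
Proof.
elim: b => [|b IH]; first by rewrite expn0.
by rewrite expnS -multE mult_INR IH.
Qed.

Lemma resq_pos : (0 < resq reps)%R.
Proof. rewrite /resq; apply: lt_0_INR; apply/ltP; exact: q_pos. Qed.

Lemma haar_ball m :
  haar_open ord unif reps (fun x => vge x (Z.of_nat m)) = ((/ resq reps) ^ m)%R.
Proof.
rewrite /haar_open.
rewrite (Lim_seq_ext_loc _ (fun _ => ((/ resq reps) ^ m)%R)) ?Lim_seq_const //.
exists m => N /leP mN.
rewrite inner_count_ball // INR_expn -/(resq reps).
have hq := resq_pos.
have -> : N = ((N - m) + m)%nat by rewrite subnK.
rewrite addnK pow_add -Rinv_pow; last lra.
field; split; apply: pow_nonzero; lra.
Qed.

Lemma haar_empty : haar_open ord unif reps (fun _ => False) = 0%R.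
Proof.
rewrite /haar_open.
rewrite (Lim_seq_ext _ (fun _ => 0%R)) ?Lim_seq_const //.
move=> N; rewrite /inner_count.
have -> : #|[set f : {ffun 'I_N -> 'I_q} | decide (forall y, in_o ord y ->
   (fun _ : k => False) (digit_elem unif f + unif ^+ N * y))]| = 0%nat.
  apply/eqP; rewrite cards_eq0; apply/eqP/setP => f; rewrite !inE.
  apply/negbTE/negP => /decideP h; exact: (h 0 (or_introl (erefl _))).
rewrite /= /Rdiv Rmult_0_l //.
Qed.

End Val.

Lemma haar_ext (k : fieldType) (ord : k -> Z) unif reps (S S' : k -> Prop) :
  (forall x, S x <-> S' x) -> haar_open ord unif reps S = haar_open ord unif reps S'.
Proof.
move=> h; have -> // : S = S'.
by apply: functional_extensionality => x; apply: propositional_extensionality.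
Qed.



Section P2Sec.
Local Open Scope C_scope.

Lemma Cpow_addn (z : C) n m : z ^ (n + m) = z ^ n * z ^ m.
Proof. elim: n => [|n IH]; rewrite ?add0n ?addSn /=; [ring | rewrite IH; ring]. Qed.

Lemma Cpow_double (z : C) n : z ^ (n.*2) = (z * z) ^ n.
Proof. elim: n => [|n IH] //. by rewrite doubleS !Cpow_S IH Cmult_assoc. Qed.

Lemma zpow_even (z a : C) j : z ^ (j.*2) * a ^ j = (z * z * a) ^ j.
Proof. by rewrite Cpow_double -Cpow_mult_l. Qed.

Section Sums.
Variables (z a : C).
Let r := z * z * a.
Hypothesis hr : 1 - r <> 0.

Lemma even_case h n :
  sum_n (fun l => z ^ l * a ^ (half (h.*2 + l))) (n.*2) =
  a ^ h * (1 - r ^ n.+1) / (1 - r) + z * a ^ h * (1 - r ^ n) / (1 - r).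
Proof.
elim: n => [|n IH].
  rewrite sum_O addn0 half_double /=. field. exact: hr.
rewrite doubleS !sum_Sn IH.
have e1 : z ^ (n.*2).+1 * a ^ half (h.*2 + (n.*2).+1) = z * a ^ h * r ^ n.
  rewrite addnS -doubleD -uphalfE uphalf_double Cpow_addn /= -zpow_even /r. ring.
have e2 : z ^ (n.*2).+2 * a ^ half (h.*2 + (n.*2).+2) = a ^ h * r ^ n.+1.
  rewrite !addnS -doubleD -doubleS -(doubleS (h + n)) half_double -addnS Cpow_addn -zpow_even /r. ring.
change (sum_n (fun l : nat => z ^ l * a ^ half (h.*2 + l)) (n.*2)) with
  (sum_n (fun l : nat => z ^ l * a ^ half (h.*2 + l)) (n.*2)).
rewrite /plus /= e1 e2 /=. field. exact: hr.
Qed.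


Lemma half_eq x m : (x = m.*2 \/ x = (m.*2).+1)%nat -> half x = m.
Proof. by case=> ->; rewrite ?half_double // -uphalfE uphalf_double. Qed.

Lemma odd_case h n :
  sum_n (fun l => z ^ l * a ^ (half ((h.*2).+1 + l))) ((n.*2).+1) =
  a ^ h * (1 - r ^ n.+1) / (1 - r) + z * a ^ h.+1 * (1 - r ^ n.+1) / (1 - r).
Proof.
elim: n => [|n IH].
  rewrite sum_Sn sum_O (half_eq (m:=h)); last by right; rewrite addn0.
  rewrite (half_eq (m:=h.+1)); last first.
    left. rewrite -!addnn. lia.
  rewrite /plus /= /r. field. exact: hr.
have ->: ((n.+1).*2).+1 = ((n.*2).+1).+2 by rewrite doubleS.
rewrite sum_Sn sum_Sn IH.
have e1 : z ^ ((n.*2).+1).+1 * a ^ half ((h.*2).+1 + ((n.*2).+1).+1) = a ^ h * r ^ n.+1.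
  rewrite (half_eq (m:=(h + n.+1))); last by right; rewrite -!addnn; lia.
  rewrite -(doubleS n) Cpow_addn -zpow_even /r. ring.
have e2 : z ^ ((n.*2).+1).+2 * a ^ half ((h.*2).+1 + ((n.*2).+1).+2) = z * a ^ h.+1 * r ^ n.+1.
  rewrite (half_eq (m:=(h.+1 + n.+1))); last by left; rewrite -!addnn; lia.
  have -> : ((n.*2).+1).+2 = ((n.+1).*2).+1 by rewrite doubleS.
  rewrite Cpow_S Cpow_addn -zpow_even /r. ring.
rewrite /plus /= e1 e2 /=. field. exact: hr.
Qed.

End Sums.

Lemma series_closed (qR : R) (z : C) (e T : nat) (X : nat -> R) :
  (0 < qR)%R -> 1 - z * (z * / RtoC qR) <> 0 -> (e <= T.*2)%nat ->
  (forall l, (e + l <= T.*2)%nat -> X l = ((/ qR) ^ half (e + l))%R) ->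
  (forall l, ~ (e + l <= T.*2)%nat -> X l = 0%R) ->
  is_series (fun l => z ^ l * RtoC (X l))
   (RtoC ((/ qR) ^ half e) * (1 - (z * (z * / RtoC qR)) ^ (T + 1 - uphalf e)) / (1 - z * (z * / RtoC qR))
    + z * RtoC ((/ qR) ^ uphalf e) * (1 - (z * (z * / RtoC qR)) ^ (T - half e)) / (1 - z * (z * / RtoC qR))).
Proof.
move=> hq hr1 heT hX hX0.
have ha : RtoC (/ qR) = / RtoC qR by rewrite RtoC_inv //; lra.
have hr : z * (z * / RtoC qR) = z * z * RtoC (/ qR) by rewrite ha; ring.
rewrite hr in hr1 *.
set a := RtoC (/ qR) in hr hr1 *.
set L := (T.*2 - e)%nat.
set S := (X in is_series _ X).
have hsum : sum_n (fun l => z ^ l * RtoC (X l)) L = S.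
  rewrite (sum_n_ext_loc _ (fun l => z ^ l * a ^ (half (e + l)))); last first.
    move=> l /leP hl; rewrite hX ?RtoC_pow //; rewrite /L in hl; lia.
  have [h [p [hp he]]] : exists h p, (p <= 1)%nat /\ e = (p + h.*2)%nat.
    exists (half e), (odd e); split; first by case: odd.
    by rewrite odd_double_half.
  rewrite /S {S} /L {L}; subst e; clear hX hX0; rewrite !RtoC_pow -/a.
  case: p hp heT => [_|[|//] _] heT.
  - rewrite add0n half_double uphalf_double in heT *.
    have [n ->] : exists n, T = (h + n)%nat by exists (T - h)%nat; rewrite -!addnn in heT; lia.
    have -> : ((h + n).*2 - h.*2)%nat = n.*2 by rewrite -!addnn; lia.
    have -> : (h + n + 1 - h)%nat = n.+1 by lia.
    have -> : (h + n - h)%nat = n by lia.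
    exact: even_case.
  - rewrite add1n in heT *.
    rewrite (half_eq (m:=h)); last by right.
    have -> : uphalf (h.*2).+1 = h.+1 by rewrite uphalfE (half_eq (m:=h.+1)) //; left; rewrite -!addnn; lia.
    have [n ->] : exists n, T = (h.+1 + n)%nat by exists (T - h.+1)%nat; rewrite -!addnn in heT; lia.
    have -> : ((h.+1 + n).*2 - (h.*2).+1)%nat = (n.*2).+1 by rewrite -!addnn; lia.
    have -> : (h.+1 + n + 1 - h.+1)%nat = n.+1 by lia.
    have -> : (h.+1 + n - h)%nat = n.+1 by lia.
    exact: odd_case.
rewrite /is_series.
apply: (filterlim_ext_loc (fun _ => S)); last exact: filterlim_const.
exists L => n /leP hn.
have -> : n = (L + (n - L))%nat by lia.
elim: (n - L)%nat => [|d IH]; first by rewrite addn0.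
rewrite addnS sum_Sn -IH hX0; last by rewrite /L; lia.
rewrite /plus /=. ring.
Qed.

Lemma series_zero (z : C) (X : nat -> R) :
  (forall l, X l = 0%R) -> is_series (fun l => z ^ l * RtoC (X l)) (RtoC 0).
Proof.
move=> h0; rewrite /is_series.
apply: (filterlim_ext_loc (fun _ => RtoC 0)); last exact: filterlim_const.
exists 0%nat => n _; elim: n => [|n IH]; first by rewrite sum_O h0; ring.
by rewrite sum_Sn -IH h0 /plus /=; ring.
Qed.

End P2Sec.


Section Char.
Variables (k : fieldType) (ord : k -> Z) (unif : k) (reps : seq k).
Hypothesis H : is_nonarch_local_field ord unif reps.
Local Open Scope ring_scope.
Variables (Delta t : k) (T : nat).
Hypotheses (hD : ord Delta = 1%Z) (D0 : Delta != 0) (t0 : t != 0)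
  (hT : ord t = Z.of_nat T) (two0 : (2%:R : k) != 0) (hE : (0 <= ord 2%:R)%Z).

Lemma vge_nz x n : x != 0 -> (vge ord x n <-> (n <= ord x)%Z).
Proof. move=> x0; split; [case=> // /eqP; by rewrite (negbTE x0) | by right]. Qed.

Lemma D_char x l : vge ord x 0 ->
  (in_ideal ord (2%:R * unif ^+ l) (sq_form Delta x - t ^+ 2) <->
   ((ord 2%:R + Z.of_nat l <= 2 * Z.of_nat T)%Z /\
    vge ord x (Z.of_nat (half (Z.to_nat (ord 2%:R) + l))))).
Proof.
move=> hx.
have u0 := unif_neq0 H.
have c0 : 2%:R * unif ^+ l != 0 by rewrite mulf_neq0 // expf_neq0.
rewrite (vge_ordc H _ c0) (ord_mul H two0 (expf_neq0 _ u0)) (ord_unifX H).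
set E := ord 2%:R.
have hE0 : (0 <= E)%Z := hE.
set m := half (Z.to_nat E + l).
have hm := odd_double_half (Z.to_nat E + l).
rewrite -/m in hm.
have hm' : (Z.of_nat (Z.to_nat E + l) = Z.of_nat (odd (Z.to_nat E + l)) + 2 * Z.of_nat m)%Z.
  by rewrite -{1}hm -addnn; lia.
have ho : (Z.of_nat (odd (Z.to_nat E + l)) <= 1)%Z by case: odd => /=; lia.
have hEl : Z.of_nat (Z.to_nat E + l) = (E + Z.of_nat l)%Z by lia.
have t20 : - t ^+ 2 != 0 by rewrite oppr_eq0 expf_neq0.
have ot2 : ord (- t ^+ 2) = (2 * Z.of_nat T)%Z by rewrite (ordN H) (ordX H _ t0) hT.
have [->|x0] := eqVneq x 0.
  rewrite /sq_form expr0n /= mulr0 sub0r (vge_nz _ t20) ot2.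
  split; [move=> h; split => //; exact: vge0 | by case].
have A0 : Delta * x ^+ 2 != 0 by rewrite mulf_neq0 // expf_neq0.
have oA : ord (Delta * x ^+ 2) = (1 + 2 * ord x)%Z by rewrite (ord_mul H D0 (expf_neq0 _ x0)) hD (ordX H _ x0).
rewrite /sq_form (vge_nz _ x0).
have [lt|lt] : (1 + 2 * ord x < 2 * Z.of_nat T \/ 2 * Z.of_nat T < 1 + 2 * ord x)%Z by lia.
- have [s0 os] := ord_add_lt H A0 t20 (ltac:(rewrite oA ot2; exact lt)).
  rewrite (vge_nz _ s0) os oA. lia.
- have [s0 os] := ord_add_lt H t20 A0 (ltac:(rewrite oA ot2; exact lt)).
  rewrite addrC in s0 os.
  rewrite (vge_nz _ s0) os ot2. lia.
Qed.

End Char.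


Lemma PRZ_lt (x : R) a b : (1 < x)%R -> (a < b)%Z -> (powerRZ x a < powerRZ x b)%R.
Proof.
move=> hx hab; rewrite !powerRZ_Rpower; try lra.
apply: Rpower_lt => //; apply: IZR_lt; lia.
Qed.

Lemma PRZ_inj (x : R) a b : (1 < x)%R -> powerRZ x a = powerRZ x b -> a = b.
Proof.
move=> hx e; have [h|[h|h]] : (a < b \/ a = b \/ b < a)%Z by lia.
- have := PRZ_lt hx h; lra.
- by [].
- have := PRZ_lt hx h; lra.
Qed.

Lemma PRZ_le (x : R) a b : (1 < x)%R -> ((powerRZ x a <= powerRZ x b)%R <-> (a <= b)%Z).
Proof.
move=> hx; split=> h.
- have [//|lt] : (a <= b \/ b < a)%Z by lia.
  have := PRZ_lt hx lt; lra.
- have [lt|->] : (a < b \/ a = b)%Z by lia.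
  + have := PRZ_lt hx lt; lra.
  + lra.
Qed.

Section Main.
Variables (k : fieldType) (ord : k -> Z) (unif : k) (reps : seq k).
Hypothesis H : is_nonarch_local_field ord unif reps.
Local Open Scope ring_scope.

Lemma q_ge2 : (2 <= size reps)%nat.
Proof.
have [i0 [hi0 h0]] := reps_cover H (or_introl (erefl (0:k))).
have [i1 [hi1 h1]] := reps_cover H (or_intror (Z.eq_le_incl _ _ (esym (ord_one H))) : in_o ord (1:k)).
have hi0' : leq i0.+1 (size reps) := hi0.
have hi1' : leq i1.+1 (size reps) := hi1.
suff : i0 <> i1 by lia.
move=> e; subst i1.
move/(in_ideal_unif H): h0 => h0; move/(in_ideal_unif H): h1 => h1.
have := vgeB H h1 h0; rewrite sub0r opprK subrK.
case=> [/eqP|]; first by rewrite oner_eq0.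
rewrite (ord_one H); lia.
Qed.

Lemma resq_gt1 : (1 < resq reps)%R.
Proof.
rewrite /resq; have := q_ge2 => /leP h; apply: (Rlt_le_trans _ (INR 2)).
  rewrite /=; lra.
exact: le_INR.
Qed.

Lemma absv_nz x : x != 0 -> absv ord reps x = powerRZ (resq reps) (- ord x).
Proof. by move=> x0; rewrite /absv (negbTE x0). Qed.

Lemma absv_unif : absv ord reps unif = (/ resq reps)%R.
Proof. by rewrite absv_nz ?(unif_neq0 H) // (ord_unif H) /= Rmult_1_r. Qed.


Section XV.
Variables (Delta t : k) (T : nat).
Hypotheses (hD : ord Delta = 1%Z) (D0 : Delta != 0) (t0 : t != 0)
  (hT : ord t = Z.of_nat T) (two0 : (2%:R : k) != 0) (hE : (0 <= ord 2%:R)%Z).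

Lemma X_val l : X_ell ord unif reps (sq_form Delta) (t ^+ 2) l =
  if leq (ram_index ord + l) (T.*2) then ((/ resq reps) ^ half (ram_index ord + l))%R else 0%R.
Proof.
rewrite /X_ell.
have eE : Z.of_nat (ram_index ord) = ord 2%:R := Z2Nat.id _ hE.
case: ifP => hl.
- rewrite -(haar_ball H (half (ram_index ord + l))). apply: haar_ext => x. split.
  + by case=> hx /(D_char H hD D0 t0 hT two0 hE _ hx) [_ hm].
  + move=> hm. have hx : vge ord x 0 := vge_mono (m:=0%Z) (n:=Z.of_nat (half (ram_index ord + l))) (ltac:(lia)) hm.
    split => //. apply/(D_char H hD D0 t0 hT two0 hE _ hx). split => //.
    rewrite -eE -!addnn in hl *; lia.
- rewrite -(@haar_empty _ ord unif reps). apply: haar_ext => x; split => //.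
  case=> hx /(D_char H hD D0 t0 hT two0 hE _ hx) [h _].
  move/negbT: hl; rewrite -ltnNge -eE -!addnn in h *; lia.
Qed.

End XV.
End Main.

Lemma z_cond (qR : R) (beta : C) : (1 < qR)%R -> (0 < fst beta)%R ->
  (1 - qpowC qR beta * (qpowC qR beta * / RtoC qR))%C <> 0%C.
Proof.
move=> hq hb.
set A := Rpower qR (- fst beta).
have hA0 : (0 < A)%R by rewrite /A /Rpower; apply: exp_pos.
have hA1 : (A < 1)%R.
  rewrite /A -(Rpower_O qR); last lra.
  apply: Rpower_lt => //; lra.
have hm : Cmod (qpowC qR beta) = A.
  rewrite /Cmod /qpowC /= -/A.
  set th := (snd beta * ln qR)%R.
  have hsc := sin2_cos2 th; rewrite /Rsqr in hsc.
  have -> : ((A * cos th) ^ 2 + (- (A * sin th)) ^ 2 = A ^ 2 * (sin th * sin th + cos th * cos th))%R by ring.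
  rewrite hsc Rmult_1_r sqrt_pow2 //; lra.
set z := qpowC qR beta.
move=> h0.
have hX1 : (z * (z * / RtoC qR))%C = 1%C.
  transitivity (1 - (1 - z * (z * / RtoC qR)))%C; first ring.
  rewrite h0; ring.
have hq0 : RtoC qR <> 0%C by move=> /RtoC_inj; lra.
have := f_equal Cmod hX1.
rewrite Cmod_1 !Cmod_mult Cmod_inv // Cmod_R Rabs_pos_eq; last lra.
rewrite hm.
have hi : (0 < / qR < 1)%R by split; [apply: Rinv_0_lt_compat; lra | rewrite -Rinv_1; apply: Rinv_lt_contravar; lra].
nra.
Qed.

Unset Implicit Arguments.

Theorem proposition5p3 (k : fieldType) (ord : k -> Z) (unif : k) (reps : seq k)
    (Delta t : k) (T : nat) (beta : C) :
  is_nonarch_local_field ord unif reps ->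
  residue_char_two ord unif ->
  absv ord reps Delta = absv ord reps unif ->
  t <> (GRing.zero : k) ->
  in_o ord t ->
  absv ord reps t = (/ resq reps ^ T)%R ->
  (0 < fst beta)%R ->
  let q := resq reps in
  let e := ram_index ord in
  let z := qpowC q beta in
  let w := (z * / RtoC q)%C in
  let X := fun l : nat =>
    X_ell ord unif reps (sq_form Delta) (GRing.exp t 2) l in
  ((absv ord reps (GRing.exp t 2) <= absv ord reps (GRing.natmul (GRing.one k) 2))%R ->
     is_series (fun l : nat => (z ^ l * RtoC (X l))%C)
       (RtoC (absv ord reps unif ^ half e)
          * (1 - (z * w) ^ (T + 1 - uphalf e)) / (1 - z * w)
        + z * RtoC (absv ord reps unif ^ uphalf e)
          * (1 - (z * w) ^ (T - half e)) / (1 - z * w))%C)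
  /\
  (~ (absv ord reps (GRing.exp t 2) <= absv ord reps (GRing.natmul (GRing.one k) 2))%R ->
     is_series (fun l : nat => (z ^ l * RtoC (X l))%C) (RtoC 0)).
Proof.
move=> H [two0 h2] habsD tnz _ habst hb q e z w X.
have hq1 : (1 < q)%R := resq_gt1 H.
have u0 := unif_neq0 H.
have hau := absv_unif H.
have D0 : Delta != GRing.zero.
  apply/negP => /eqP hD0; move: habsD; rewrite hD0 hau /absv eqxx => h.
  have : (0 < / resq reps)%R by apply: Rinv_0_lt_compat; rewrite -/q; lra.
  lra.
have hD : ord Delta = 1%Z.
  move: habsD; rewrite (absv_nz ord reps D0) (absv_nz ord reps u0) (ord_unif H) => /(PRZ_inj hq1); lia.
have t0 : t != GRing.zero by apply/eqP.
have hT : ord t = Z.of_nat T.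
  move: habst; rewrite (absv_nz ord reps t0) pow_powerRZ -powerRZ_neg' => /(PRZ_inj hq1); lia.
have hE1 : (1 <= ord (GRing.natmul (GRing.one k) 2))%Z.
  by move/(in_ideal_unif H): h2 => [/eqP|//]; rewrite (negbTE two0).
have hE : (0 <= ord (GRing.natmul (GRing.one k) 2))%Z by lia.
have eE : Z.of_nat e = ord (GRing.natmul (GRing.one k) 2) := Z2Nat.id _ hE.
have hX : forall l, X l = if leq (e + l) (T.*2) then ((/ q) ^ half (e + l))%R else 0%R.
  move=> l; exact: (X_val H hD D0 t0 hT two0 hE l).
have hcond : (absv ord reps (GRing.exp t 2) <= absv ord reps (GRing.natmul (GRing.one k) 2))%R <-> (e <= T.*2)%coq_nat.
  rewrite (absv_nz ord reps (expf_neq0 _ t0)) (absv_nz ord reps two0) (ordX H _ t0) hT (PRZ_le _ _ hq1).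
  rewrite -eE -!addnn; lia.
have hr1 := z_cond hq1 hb.
split.
- move=> /hcond hc. rewrite hau.
  rewrite /w; apply: (series_closed (qR := q) (z := z) (X := X) _ hr1 (introT leP hc)).
  + lra.
  + move=> l hl; by rewrite hX hl.
  + move=> l hl; rewrite hX; case: ifP => // h; by exfalso.
- move=> hc; apply: series_zero => l; rewrite hX; case: ifP => // /leP hl.
  exfalso; apply: hc; apply/hcond; lia.
Qed.
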